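(* Let $q$ be a prime power and $\Gamma\subseteq\mathbb{F}_q^*$ a multiplicative subgroup. Let $h_1,h_2:\mathbb{F}_q\to\mathbb{C}$ be functions supported on $\Gamma$ and let $g:\mathbb{F}_q\to\mathbb{C}$ be an arbitrary function. Then $$\frac1{|\Gamma|}\sum_{\gamma\in\Gamma}\langle\mathrm{T}^g_\Gamma h_1^\gamma,h_2^\gamma\rangle=\sum_{\alpha=1}^{|\Gamma|}c_\alpha(h_1)\overline{c_\alpha(h_2)}\cdot\langle\mathrm{T}^g_\Gamma f_\alpha,f_\alpha\rangle.$$
   Context: $\mathrm{T}^g_\Gamma$ is the matrix indexed by $\Gamma$ with entries $\mathrm{T}^g_\Gamma(x,y)=g(x-y)$ for $x,y\in\Gamma$, and $\langle\mathrm{T}^g_\Gamma a,b\rangle=\sum_{x,y\in\Gamma}g(x-y)a(y)\overline{b(x)}$. For $\gamma\in\mathbb{F}_q^*$, $h^\gamma(x)=h(\gamma x)$. Let $t=|\Gamma|$, $n=(q-1)/t$, $\mathbf g$ a primitive root, $\Gamma=\{\mathbf g^{nl}:0\le l<t\}$; $\chi_\alpha(\mathbf g^{nl})=e^{2\pi i\alpha l/t}$ on $\Gamma$ and $0$ off $\Gamma$, $f_\alpha=|\Gamma|^{-1/2}\chi_\alpha$ ($\alpha\in[t]$), and $c_\alpha(\varphi)=\sum_{x\in\Gamma}\varphi(x)\overline{f_\alpha(x)}$. *)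

(* Defs.v *)
From mathcomp Require Import all_boot all_order all_algebra all_field.
Set Implicit Arguments. Unset Strict Implicit. Unset Printing Implicit Defensive.
Import GRing.Theory Num.Theory.
Local Open Scope ring_scope.

Definition is_mult_subgroup (F : finFieldType) (G : {set F}) : Prop :=
  [/\ 1 \in G, 0 \notin G,
      (forall x y, x \in G -> y \in G -> x * y \in G)
    & (forall x, x \in G -> x^-1 \in G)].

Definition supported_on (F : finFieldType) (G : {set F}) (h : F -> algC) : Prop :=
  forall x, x \notin G -> h x = 0.

Definition Tform (F : finFieldType) (G : {set F}) (gf : F -> algC)
  (a b : F -> algC) : algC :=
  \sum_(x in G) \sum_(y in G) gf (x - y) * a y * Num.conj (b x).

Definition dil (F : finFieldType) (h : F -> algC) (c : F) : F -> algC :=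
  fun x => h (c * x).

(* e^{2 pi i / t}: t.-root (-1) is e^{i pi / t} (minimal nonneg. argument) *)
Definition omega (t : nat) : algC := (t.-root (-1)) ^+ 2.

Definition chi (F : finFieldType) (G : {set F}) (g : F) (alpha : nat) (x : F)
  : algC :=
  let t := #|G| in
  let n := (#|F|.-1 %/ t)%N in
  if x \in G then
    match [pick l : 'I_t | g ^+ (n * l) == x] with
    | Some l => omega t ^+ (alpha * l)
    | None => 0
    end
  else 0.

Definition fvec (F : finFieldType) (G : {set F}) (g : F) (alpha : nat) (x : F)
  : algC := (sqrtC (#|G|%:R))^-1 * chi G g alpha x.

Definition coef (F : finFieldType) (G : {set F}) (g : F) (alpha : nat)
  (phi : F -> algC) : algC :=
  \sum_(x in G) phi x * Num.conj (fvec G g alpha x).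

(* Main.v *)
Require Import Defs.
From mathcomp Require Import all_boot all_order all_algebra all_field.
Import GRing.Theory Num.Theory.
Local Open Scope ring_scope.
From mathcomp Require Import ring.
Import Order.TTheory.

Lemma unit_conj (x : algC) n : (0 < n)%N -> x ^+ n = 1 -> x * x^* = 1.
Proof.
move=> n0 xn; rewrite -normCK.
have : `|x| ^+ n == 1 by rewrite -normrX xn normr1.
by rewrite pexpr_eq1 // => /eqP ->; rewrite expr1n.
Qed.

Lemma geom0 (r : algC) m : r ^+ m = 1 -> r != 1 -> \sum_(k < m) r ^+ k = 0.
Proof.
move=> rm r1; have := subrX1 r m; rewrite rm subrr => /esym/eqP.
by rewrite mulf_eq0 subr_eq0 (negPf r1) /= => /eqP.
Qed.

Lemma orth_pow (xi : algC) m (j l : nat) : m.-primitive_root xi ->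
  (j < m)%N -> (l < m)%N ->
  \sum_(k < m) (xi ^+ j * (xi ^+ l)^* ) ^+ k = if j == l then m%:R else 0.
Proof.
move=> pr jm lm; have m0 : (0 < m)%N by apply: leq_ltn_trans jm.
have xm := prim_expr_order pr.
have cl : xi ^+ l * (xi ^+ l)^* = 1.
  by apply: (@unit_conj _ m m0); rewrite exprAC xm expr1n.
case: eqP => [->|/eqP jl].
  by rewrite cl (eq_bigr (fun _ => 1)) ?sumr_const ?card_ord // => i _; rewrite expr1n.
apply: geom0.
  by rewrite exprMn -rmorphXn -!exprM mulnC exprM xm mulnC exprM xm !expr1n rmorph1 mulr1.
apply/eqP=> h; move/eqP: jl; apply.
have : xi ^+ j == xi ^+ l.
  by rewrite -[xi ^+ j]mulr1 -cl mulrCA h mulr1.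
by rewrite (eq_prim_root_expr pr) !modn_small // => /eqP.
Qed.


Lemma norm_one (x : algC) n : (0 < n)%N -> x ^+ n * (x ^+ n)^* = 1 -> x * x^* = 1.
Proof.
move=> n0 h; have : (x * x^*) ^+ n == 1 by rewrite exprMn -rmorphXn h.
by rewrite pexpr_eq1 ?mul_conjC_ge0 // => /eqP.
Qed.

Lemma norm1B (u : algC) : u * u^* = 1 -> `|1 - u| ^+ 2 = 2 - 2 * 'Re u.
Proof.
move=> h; rewrite normCK ReE rmorphB rmorph1 [2 * _]mulrC divfK ?pnatr_eq0 //.
have -> : (1 - u) * (1 - u^*) = 1 + u * u^* - (u + u^*) by ring.
by rewrite h.
Qed.

Lemma term_eq (w0 xi : algC) (j l k : nat) :
  (w0 * xi ^+ k) ^+ j * ((w0 * xi ^+ k) ^+ l)^* =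
  w0 ^+ j * (w0 ^+ l)^* * (xi ^+ j * (xi ^+ l)^*) ^+ k.
Proof.
rewrite !rmorphXn !rmorphM !rmorphXn !exprMn -!exprM.
rewrite [(k * j)%N]mulnC [(k * l)%N]mulnC.
ring.
Qed.

Lemma K_arg (z : algC) m : (1 < m)%N -> z * z^* = 1 -> z != 1 ->
  exists w, w ^+ m = z /\ 'Re z < 'Re w.
Proof.
move=> m1 hz z1; have m0 : (0 < m)%N by apply: ltnW.
have [xi pr] := C_prim_root_exists m0.
set w0 := m.-root z; have hw0 : w0 ^+ m = z by rewrite rootCK.
have cw0 : w0 * w0^* = 1 by apply: (@norm_one _ m m0); rewrite hw0.
have cxi : xi * xi^* = 1 by apply: (@unit_conj _ m m0); rewrite prim_expr_order.
case: (boolP [exists k : 'I_m, 'Re z < 'Re (w0 * xi ^+ k)]) => [/existsP [k hk] | H].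
  exists (w0 * xi ^+ k); split => //.
  by rewrite exprMn hw0 exprAC (prim_expr_order pr) expr1n mulr1.
exfalso.
have H' : forall k : 'I_m, 'Re (w0 * xi ^+ k) <= 'Re z.
  move/existsPn: H => H k; move: (H k).
  by rewrite real_ltNge ?Creal_Re // negbK.
pose S (k : 'I_m) := \sum_(j < m) (w0 * xi ^+ k) ^+ j.
have Sle : forall k, `|S k| ^+ 2 <= 1.
  move=> k; set u := w0 * xi ^+ k.
  have cu : u * u^* = 1.
    by rewrite /u rmorphM rmorphXn mulrACA -exprMn cxi expr1n cw0 mulr1.
  have e1 : (u - 1) * S k = z - 1.
    by rewrite -subrX1 /u exprMn hw0 exprAC (prim_expr_order pr) expr1n mulr1.
  have D0 : 0 < `|1 - z| ^+ 2.
    by rewrite exprn_gt0 // normr_gt0 subr_eq0 eq_sym.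
  have le1 : `|1 - z| ^+ 2 <= `|1 - u| ^+ 2.
    rewrite !norm1B // lerD2l lerN2 ler_pM2l ?ltr0n //; exact: H' k.
  have e2 : `|1 - u| ^+ 2 * `|S k| ^+ 2 = `|1 - z| ^+ 2.
    by rewrite -exprMn -normrM -opprB mulNr e1 opprB.
  have : `|1 - z| ^+ 2 * `|S k| ^+ 2 <= `|1 - z| ^+ 2 * 1.
    rewrite mulr1 -{2}e2; apply: ler_wpM2r => //.
    by rewrite exprn_ge0 ?normr_ge0.
  by move=> h; rewrite -(ler_pM2l D0).
have sum_eq : \sum_(k < m) `|S k| ^+ 2 = m%:R * m%:R.
  rewrite (eq_bigr (fun k : 'I_m => \sum_(j < m) \sum_(l < m)
            (w0 * xi ^+ k) ^+ j * ((w0 * xi ^+ k) ^+ l)^* )); last first.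
    move=> k _; rewrite normCK /S rmorph_sum mulr_suml; apply: eq_bigr => j _.
    by rewrite mulr_sumr.
  rewrite exchange_big /=.
  rewrite (eq_bigr (fun j : 'I_m => w0 ^+ j * (w0 ^+ j)^* * m%:R)); last first.
    move=> j _; rewrite exchange_big /=.
    rewrite (bigD1 j) //= [X in _ + X]big1 => [|l lj].
      rewrite addr0 (eq_bigr (fun k : 'I_m => w0 ^+ j * (w0 ^+ j)^* *
          (xi ^+ j * (xi ^+ j)^* ) ^+ k)) => [|k _]; last by rewrite term_eq.
      by rewrite -mulr_sumr orth_pow // eqxx.
    rewrite (eq_bigr (fun k : 'I_m => w0 ^+ j * (w0 ^+ l)^* *
          (xi ^+ j * (xi ^+ l)^* ) ^+ k)) => [|k _]; last by rewrite term_eq.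
    rewrite -mulr_sumr orth_pow // ifF ?mulr0 //; apply/eqP => hh; move/eqP: lj; apply; exact: val_inj.
  rewrite (eq_bigr (fun _ => m%:R)) ?sumr_const ?card_ord ?mulr_natl // => j _.
  by rewrite rmorphXn -exprMn cw0 expr1n mul1r.
have : m%:R * m%:R <= m%:R :> algC.
  rewrite -sum_eq; apply: le_trans (_ : _ <= \sum_(k < m) 1) _.
    by apply: ler_sum => k _; apply: Sle.
  by rewrite sumr_const card_ord.
rewrite -natrM ler_nat -[X in (_ <= X)%N]muln1 leq_mul2l.
by case/orP=> [/eqP m00|]; [rewrite m00 in m1 | rewrite leqNgt m1].
Qed.


Lemma N1neq1 : (-1 : algC) != 1.
Proof. by rewrite -subr_eq0 -opprD oppr_eq0 -mulr2n pnatr_eq0. Qed.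

Lemma omega_prim t : (0 < t)%N -> t.-primitive_root (omega t).
Proof.
move=> t0; pose z := t.-root (-1 : algC).
have hz : z ^+ t = -1 by rewrite rootCK.
have ho : omega t ^+ t = 1.
  by rewrite /omega -/z -exprM mulnC exprM hz sqrrN expr1n.
have [d pd dt] := prim_order_exists t0 ho.
suff dt' : d = t by move: pd; rewrite dt'.
have d0 := prim_order_gt0 pd.
apply/eqP; rewrite eqn_leq (dvdn_leq t0 dt) /= leqNgt; apply/negP => ltdt.
have hd : z ^+ (2 * d) = 1 by rewrite exprM -/z; have := prim_expr_order pd; rewrite /omega.
have tE : (t %/ d * d)%N = t := divnK dt.
have zd : z ^+ d = -1.
  have : (z ^+ d) ^+ 2 == 1 by rewrite -exprM mulnC hd.
  rewrite sqrf_eq1 => /orP[/eqP h1|/eqP //].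
  have : z ^+ t = 1 by rewrite -tE mulnC exprM h1 expr1n.
  by rewrite hz => /eqP; rewrite (negPf N1neq1).
set m := (t %/ d)%N.
have m1 : (1 < m)%N.
  rewrite ltnNge; apply/negP => hm; move: ltdt; rewrite -tE -/m.
  case: m hm => [|[|//]] _; by rewrite ?mul0n ?mul1n ?ltnn.
have cz : z * z^* = 1.
  apply: (@unit_conj _ (2 * t)); first by rewrite muln_gt0.
  by rewrite mulnC exprM hz sqrrN expr1n.
have z1 : z != 1.
  apply/eqP => h; move: hz; rewrite h expr1n => /eqP; by rewrite eq_sym (negPf N1neq1).
have [w [hw lt]] := @K_arg z m m1 cz z1.
have wt : w ^+ t = -1 by rewrite -tE -/m exprM hw.
case: (boolP (0 <= 'Im w)) => hIm.
  by have := rootC_Re_max t0 wt hIm; rewrite -/z (lt_geF lt).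
have hIm' : 0 <= 'Im w^*.
  rewrite Im_conj oppr_ge0; apply: ltW; move: hIm.
  by rewrite real_leNgt ?Creal_Im ?rpred0 // negbK.
have wt' : w^* ^+ t = -1 by rewrite -rmorphXn wt rmorphN1.
by have := rootC_Re_max t0 wt' hIm'; rewrite -/z Re_conj (lt_geF lt).
Qed.

Set Implicit Arguments. Unset Strict Implicit.

Lemma pow_gcd (R : idomainType) (x : R) a b : (0 < a)%N ->
  x ^+ a = 1 -> x ^+ b = 1 -> x ^+ gcdn a b = 1.
Proof.
move=> a0 xa xb; have [k pk ka] := prim_order_exists a0 xa.
apply/eqP; rewrite -(prim_order_dvd pk) dvdn_gcd ka /=.
by rewrite (prim_order_dvd pk) xb.
Qed.


Lemma G_pow_t (F : finFieldType) (G : {set F}) x :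
  is_mult_subgroup G -> x \in G -> x ^+ #|G| = 1.
Proof.
case=> G1 G0 GM GV xG.
have x0 : x != 0 by apply: contraNneq G0 => <-.
have P0 : \prod_(y in G) y != 0.
  by apply/prodf_neq0 => y yG; apply: contraNneq G0 => <-.
have : \prod_(y in G) (x * y) = \prod_(y in G) y.
  rewrite [RHS](reindex (fun y => x * y)).
    apply: eq_bigl => y; apply/idP/idP => [yG|]; first exact: GM.
    by move=> h; rewrite -(mulKf x0 y); apply: GM => //; apply: GV.
  exists (fun y => x^-1 * y) => y _; [exact: mulKf | exact: mulVKf].
rewrite big_split /= prodr_const => /eqP.
by rewrite -subr_eq0 -{2}[\prod_(y in G) y]mul1r -mulrBl mulf_eq0 (negPf P0) orbF subr_eq0 => /eqP.
Qed.

Lemma card_pos (F : finFieldType) (G : {set F}) : is_mult_subgroup G -> (0 < #|G|)%N.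
Proof. by case=> G1 _ _ _; apply/card_gt0P; exists 1. Qed.

Lemma G_pow_N (F : finFieldType) (G : {set F}) x :
  is_mult_subgroup G -> x \in G -> x ^+ #|F|.-1 = 1.
Proof.
case=> G1 G0 _ _ xG.
have x0 : x != 0 by apply: contraNneq G0 => <-.
have F0 : (0 < #|F|)%N by apply/card_gt0P; exists 0.
have := expf_card x; rewrite -{1}(prednK F0).
rewrite exprS => h; apply: (mulfI x0); by rewrite mulr1.
Qed.

Lemma t_dvd_N (F : finFieldType) (G : {set F}) :
  is_mult_subgroup G -> (#|G| %| #|F|.-1)%N.
Proof.
move=> hG; have t0 := card_pos hG.
set d := gcdn #|G| #|F|.-1.
have d0 : (0 < d)%N by rewrite gcdn_gt0 t0.
have xd : forall x, x \in G -> x ^+ d = 1.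
  by move=> x xG; apply: pow_gcd; [exact: t0 | exact: G_pow_t hG xG | exact: G_pow_N hG xG].
have : (size (enum G) < size (('X^d - 1%:P)%R : {poly F}))%N.
  apply: max_poly_roots; last exact: enum_uniq.
    by rewrite -size_poly_eq0 size_XnsubC.
  by apply/allP => x; rewrite mem_enum => xG; rewrite /root !hornerE xd // subrr.
rewrite size_XnsubC // -cardE ltnS => td.
have : d = #|G| by apply/eqP; rewrite eqn_leq td dvdn_leq // dvdn_gcdl.
by move=> <-; rewrite dvdn_gcdr.
Qed.


Lemma n_pos (F : finFieldType) (G : {set F}) (g : F) :
  is_mult_subgroup G -> (#|F|.-1).-primitive_root g -> (0 < #|F|.-1 %/ #|G|)%N.
Proof.
move=> hG hg; have := prim_order_gt0 hg; rewrite -{1}(divnK (t_dvd_N hG)).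
by rewrite muln_gt0 => /andP[].
Qed.

Lemma e_inj (F : finFieldType) (G : {set F}) (g : F) (i j : nat) :
  is_mult_subgroup G -> (#|F|.-1).-primitive_root g ->
  (i < #|G|)%N -> (j < #|G|)%N ->
  g ^+ (#|F|.-1 %/ #|G| * i) = g ^+ (#|F|.-1 %/ #|G| * j) -> i = j.
Proof.
move=> hG hg it jt /eqP; rewrite (eq_prim_root_expr hg).
have n0 := n_pos hG hg.
have NE := esym (divnK (t_dvd_N hG)); set n := (#|F|.-1 %/ #|G|)%N in n0 NE *.
rewrite NE -!muln_modr.
rewrite eqn_mul2l (negPf (lt0n_neq0 n0)) /= !modn_small //.
by move/eqP.
Qed.

Lemma e_pow_t (F : finFieldType) (G : {set F}) (g : F) (l : nat) :
  is_mult_subgroup G -> (#|F|.-1).-primitive_root g ->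
  (g ^+ (#|F|.-1 %/ #|G| * l)) ^+ #|G| = 1.
Proof.
move=> hG hg; rewrite -exprM mulnAC (divnK (t_dvd_N hG)) exprM.
by rewrite (prim_expr_order hg) expr1n.
Qed.

Lemma G_e (F : finFieldType) (G : {set F}) (g : F) x :
  is_mult_subgroup G -> (#|F|.-1).-primitive_root g -> x \in G ->
  exists l : 'I_#|G|, g ^+ (#|F|.-1 %/ #|G| * l) = x.
Proof.
move=> hG hg xG.
case: (boolP [exists l : 'I_#|G|, g ^+ (#|F|.-1 %/ #|G| * l) == x]).
  by case/existsP => l /eqP h; exists l.
move/existsPn => H; exfalso.
set s := x :: [seq g ^+ (#|F|.-1 %/ #|G| * val l) | l <- enum 'I_#|G|].
have t0 := card_pos hG.
have : (size s < size (('X^#|G| - 1%:P)%R : {poly F}))%N.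
  apply: max_poly_roots.
  - by rewrite -size_poly_eq0 size_XnsubC.
  - apply/allP => y; rewrite inE => /orP[/eqP ->|/mapP[l _ ->]].
      by rewrite /root !hornerE (G_pow_t hG xG) subrr.
    by rewrite /root !hornerE (e_pow_t _ hG hg) subrr.
  - rewrite /s /= map_inj_uniq ?enum_uniq ?andbT.
      by apply/mapP => -[l _ h]; move: (H l); rewrite -h eqxx.
    by move=> i j h; apply: val_inj; exact: (e_inj hG hg (ltn_ord i) (ltn_ord j) h).
by rewrite size_XnsubC // /s /= size_map size_enum_ord ltnn.
Qed.

Lemma chiE (F : finFieldType) (G : {set F}) (g : F) (a : nat) x (l : 'I_#|G|) :
  is_mult_subgroup G -> (#|F|.-1).-primitive_root g -> x \in G ->
  g ^+ (#|F|.-1 %/ #|G| * l) = x -> chi G g a x = omega #|G| ^+ (a * l).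
Proof.
move=> hG hg xG hl; rewrite /chi xG.
case: pickP => [l' /eqP h|H]; last by move: (H l); rewrite hl eqxx.
suff -> : l' = l by [].
apply: val_inj; exact: (e_inj hG hg (ltn_ord l') (ltn_ord l) (etrans h (esym hl))).
Qed.

Lemma chi_unit (F : finFieldType) (G : {set F}) (g : F) (a : nat) x :
  is_mult_subgroup G -> (#|F|.-1).-primitive_root g -> x \in G ->
  chi G g a x * (chi G g a x)^* = 1.
Proof.
move=> hG hg xG; have [l hl] := G_e hG hg xG.
rewrite (chiE _ hG hg xG hl); apply: (@unit_conj _ #|G| (card_pos hG)).
by rewrite exprAC (prim_expr_order (@omega_prim _ (card_pos hG))) expr1n.
Qed.

Lemma chiM (F : finFieldType) (G : {set F}) (g : F) (a : nat) x y :
  is_mult_subgroup G -> (#|F|.-1).-primitive_root g -> x \in G -> y \in G ->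
  chi G g a (x * y) = chi G g a x * chi G g a y.
Proof.
move=> hG hg xG yG; have [i hi] := G_e hG hg xG; have [j hj] := G_e hG hg yG.
have t0 := card_pos hG.
have xyG : x * y \in G by case: hG => _ _ GM _; apply: GM.
pose k := Ordinal (ltn_pmod (i + j) t0).
have hk : g ^+ (#|F|.-1 %/ #|G| * k) = x * y.
  rewrite -hi -hj -exprD -mulnDr; apply/eqP; rewrite (eq_prim_root_expr hg) /=.
  have NE := esym (divnK (t_dvd_N hG)); set n := (#|F|.-1 %/ #|G|)%N in NE *.
  by rewrite NE -!muln_modr modn_mod.
rewrite (chiE _ hG hg xyG hk) (chiE _ hG hg xG hi) (chiE _ hG hg yG hj) /=.
rewrite -exprD -mulnDr !exprM expr_mod //.
by rewrite -exprM mulnC exprM (prim_expr_order (@omega_prim _ t0)) expr1n.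
Qed.

Lemma shift_orth (w : algC) t (i j : nat) : t.-primitive_root w ->
  (i < t)%N -> (j < t)%N ->
  \sum_(1 <= a < t.+1) (w ^+ (a * i))^* * w ^+ (a * j)
    = if j == i then t%:R else 0.
Proof.
move=> pw it jt; have t0 : (0 < t)%N by apply: leq_ltn_trans it.
rewrite big_add1 /= big_mkord.
rewrite (eq_bigr (fun a : 'I_t => (w ^+ j * (w ^+ i)^* ) * (w ^+ j * (w ^+ i)^* ) ^+ a)); last first.
  move=> a _; rewrite -exprS exprMn !rmorphXn -!exprM mulrC.
  by rewrite [(j * _)%N]mulnC [(i * _)%N]mulnC.
rewrite -mulr_sumr (@orth_pow w t j i pw) //.
case: eqP => [->|_]; last by rewrite mulr0.
by rewrite (@unit_conj _ t t0) ?mul1r // exprAC (prim_expr_order pw) expr1n.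
Qed.

Lemma chi_orth (F : finFieldType) (G : {set F}) (g : F) x y :
  is_mult_subgroup G -> (#|F|.-1).-primitive_root g -> x \in G -> y \in G ->
  \sum_(1 <= a < #|G|.+1) (chi G g a x)^* * chi G g a y
    = if x == y then #|G|%:R else 0.
Proof.
move=> hG hg xG yG; have [i hi] := G_e hG hg xG; have [j hj] := G_e hG hg yG.
have t0 := card_pos hG; have pw := @omega_prim _ t0.
rewrite (eq_bigr (fun a => (omega #|G| ^+ (a * i))^* * omega #|G| ^+ (a * j))); last first.
  by move=> a _; rewrite (chiE _ hG hg xG hi) (chiE _ hG hg yG hj).
rewrite (shift_orth pw) ?ltn_ord //.
have -> : (x == y) = (nat_of_ord j == nat_of_ord i).
  apply/eqP/eqP => [exy|eij]; last by rewrite -hi -hj eij.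
  apply: (e_inj hG hg (ltn_ord j) (ltn_ord i)); by rewrite hi hj exy.
by [].
Qed.


Lemma reindexG (F : finFieldType) (G : {set F}) y (H : F -> algC) :
  is_mult_subgroup G -> y \in G ->
  \sum_(z in G) H z = \sum_(c in G) H (c * y).
Proof.
case=> G1 G0 GM GV yG.
have y0 : y != 0 by apply: contraNneq G0 => <-.
rewrite (reindex (fun c => c * y)).
  apply: eq_bigl => c; apply/idP/idP => [h|cG]; last exact: GM.
  by rewrite -(mulfK y0 c); apply: GM => //; apply: GV.
exists (fun z => z * y^-1) => z _; [exact: mulfK | exact: divfK].
Qed.

Lemma sqrt_facts (t : nat) : (0 < t)%N ->
  ((sqrtC (t%:R : algC))^-1)^* = (sqrtC (t%:R : algC))^-1 /\
  (sqrtC (t%:R : algC))^-1 * (sqrtC (t%:R : algC))^-1 = (t%:R)^-1.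
Proof.
move=> t0; split.
  by rewrite geC0_conj // invr_ge0 sqrtC_ge0 ler0n.
by rewrite -invfM -expr2 sqrtCK.
Qed.

Lemma A_eq (F : finFieldType) (G : {set F}) (g : F) (h : F -> algC) a y :
  is_mult_subgroup G -> (#|F|.-1).-primitive_root g -> y \in G ->
  coef G g a h * fvec G g a y
  = (#|G|%:R)^-1 * \sum_(c in G) h (c * y) * (chi G g a c)^*.
Proof.
move=> hG hg yG; have [sc ss] := sqrt_facts (card_pos hG).
rewrite /coef /fvec mulr_suml (reindexG _ hG yG) mulr_sumr; apply: eq_bigr => c cG.
have cyG : c * y \in G by case: hG => _ _ GM _; apply: GM.
rewrite rmorphM /= sc (chiM _ hG hg cG yG) rmorphM /=.
have u := chi_unit a hG hg yG.
set s := (sqrtC _)^-1 in sc ss *.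
set X := chi G g a y in u *.
rewrite -ss.
have -> : h (c * y) * (s * ((chi G g a c)^* * X^*)) * (s * X)
  = h (c * y) * (chi G g a c)^* * (s * s) * (X * X^*) by ring.
by rewrite u mulr1 mulrC.
Qed.

Lemma key (F : finFieldType) (G : {set F}) (g : F) (h1 h2 : F -> algC) x y :
  is_mult_subgroup G -> (#|F|.-1).-primitive_root g -> x \in G -> y \in G ->
  \sum_(1 <= a < #|G|.+1)
     coef G g a h1 * (coef G g a h2)^* * (fvec G g a y * (fvec G g a x)^* )
  = (#|G|%:R)^-1 * \sum_(c in G) h1 (c * y) * (h2 (c * x))^*.
Proof.
move=> hG hg xG yG; have t0 := card_pos hG.
set T := (#|G|%:R : algC).
have T0 : T != 0 by rewrite pnatr_eq0 -lt0n.
have cT : (T^-1)^* = T^-1 by rewrite geC0_conj // invr_ge0 ler0n.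
transitivity (\sum_(1 <= a < #|G|.+1) (T^-1 * T^-1) *
   \sum_(c in G) \sum_(c' in G) h1 (c * y) * (h2 (c' * x))^* *
      ((chi G g a c)^* * chi G g a c')).
  apply: eq_bigr => a _.
  have -> : coef G g a h1 * (coef G g a h2)^* * (fvec G g a y * (fvec G g a x)^* )
    = (coef G g a h1 * fvec G g a y) * (coef G g a h2 * fvec G g a x)^*.
    move: (coef G g a h1) (coef G g a h2) (fvec G g a y) (fvec G g a x) => c1 c2 f1 f2.
    by rewrite rmorphM /=; ring.
  rewrite (A_eq _ _ hG hg yG) (A_eq _ _ hG hg xG) rmorphM /= cT.
  have E : (\sum_(c in G) h1 (c * y) * (chi G g a c)^* ) *
            (\sum_(c in G) h2 (c * x) * (chi G g a c)^* )^* =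
     \sum_(c in G) \sum_(c' in G) h1 (c * y) * (h2 (c' * x))^* *
      ((chi G g a c)^* * chi G g a c').
    rewrite rmorph_sum /= mulr_suml; apply: eq_bigr => c _.
    rewrite mulr_sumr; apply: eq_bigr => c' _.
    by rewrite rmorphM /= conjCK; ring.
  rewrite -/T -E; ring.
rewrite -mulr_sumr exchange_big /=.
rewrite (eq_bigr (fun c => T * (h1 (c * y) * (h2 (c * x))^* ))); last first.
  move=> c cG; rewrite exchange_big /= (bigD1 c) //= [X in _ + X]big1 => [|c' /andP[c'G c'c]].
    rewrite addr0 -mulr_sumr (chi_orth hG hg cG cG) eqxx; ring.
  by rewrite -mulr_sumr (chi_orth hG hg cG c'G) eq_sym (negbTE c'c) mulr0.
rewrite -mulr_sumr; set S := \sum_(c in G) _; by field.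
Qed.

Unset Implicit Arguments. Set Strict Implicit.
Theorem lemma8 (F : finFieldType) (G : {set F}) (g : F) (h1 h2 gf : F -> algC) :
  is_mult_subgroup G ->
  (#|F|.-1).-primitive_root g ->
  supported_on G h1 -> supported_on G h2 ->
  (#|G|%:R)^-1 * \sum_(c in G) Tform G gf (dil h1 c) (dil h2 c)
  = \sum_(1 <= a < #|G|.+1)
      coef G g a h1 * Num.conj (coef G g a h2) *
      Tform G gf (fvec G g a) (fvec G g a).
Proof.
move=> hG hg _ _; rewrite /Tform /dil.
transitivity (\sum_(x in G) \sum_(y in G) gf (x - y) *
   ((#|G|%:R)^-1 * \sum_(c in G) h1 (c * y) * (h2 (c * x))^* )).
  rewrite mulr_sumr.
  under eq_bigr do rewrite mulr_sumr.
  under eq_bigr do under eq_bigr do rewrite mulr_sumr.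
  rewrite exchange_big /=; apply: eq_bigr => x _.
  rewrite exchange_big /=; apply: eq_bigr => y _.
  rewrite !mulr_sumr; apply: eq_bigr => c _; ring.
symmetry.
rewrite (eq_bigr (fun a => \sum_(x in G) \sum_(y in G) gf (x - y) *
   (coef G g a h1 * (coef G g a h2)^* * (fvec G g a y * (fvec G g a x)^* )))); last first.
  move=> a _; rewrite mulr_sumr; apply: eq_bigr => x _.
  rewrite mulr_sumr; apply: eq_bigr => y _; ring.
rewrite exchange_big /=; apply: eq_bigr => x xG.
rewrite exchange_big /=; apply: eq_bigr => y yG.
by rewrite -mulr_sumr (key _ _ hG hg xG yG).
Qed.
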